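(* Suppose the synchronizing automaton $\mathcal{A}$ with $n$ states is semisimple, and let $\mathcal{C}\subseteq[1,k]$ be a minimal core of $\mathcal{A}$. Then there is a reset word $w$ with $|w|\le(n-1)\max_{i\in\mathcal{C}}\{D(2,r_i,n)\}$, where $r_i=\mathrm{Rnk}(\mathcal{I}_i)$.
   Context: Let $\mathcal{A}=\langle Q,\Sigma,\delta\rangle$ be a synchronizing automaton with $n=|Q|$ states $q_1,\dots,q_n$; write $q\cdot u$ for the action of $u\in\Sigma^*$, $\mathrm{rk}(u)=|Q\cdot u|$, and $\mathrm{Syn}(\mathcal{A})$ for the set of reset words ($|Q\cdot u|=1$). Each word acts linearly on $\mathbb{C}Q$ by $q\mapsto q\cdot u$, preserving $w^\perp=\{x:\langle x,q_1+\dots+q_n\rangle=0\}$; let $\rho:\Sigma^*\to\mathbb{M}_{n-1}(\mathbb{C})$ be the induced representation, $\mathcal{R}$ the $\mathbb{C}$-algebra generated by $\rho(\Sigma^* )$, and $\mathrm{Rad}(\mathcal{A})=\rho^{-1}(\mathrm{Rad}(\mathcal{R}))$ (Jacobson radical). $\mathcal{A}$ is semisimple if $\mathrm{Rad}(\mathcal{A})=\mathrm{Syn}(\mathcal{A})$. Write $\mathcal{R}/\mathrm{Rad}(\mathcal{R})\cong\prod_{i=1}^k\mathbb{M}_{n_i}(\mathbb{C})$ (Wedderburn–Artin) and let $\theta_i:\Sigma^*\to\mathbb{M}_{n_i}(\mathbb{C})$ be $\rho$ followed by the quotient map and the $i$-th projection; $0_i$ is the zero matrix. The monoid $\theta_i(\Sigma^*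 )$ has a unique $0$-minimal ideal $\mathcal{I}_i$; $\mathrm{Rnk}(\mathcal{I}_i)=\min\{\mathrm{rk}(x): \theta_i(x)\in\mathcal{I}_i\setminus\{0_i\}\}$. A subset $T\subseteq[1,k]$ is a core if every word $x$ with $\theta_i(x)=0_i$ for all $i\in T$ satisfies $\theta_i(x)=0_i$ for all $i\in[1,k]$; a minimal core is one minimal under inclusion. $D(2,r,n)$ denotes the maximum size of a family of $r$-element subsets of $[1,n]$ in which every $2$-element subset is contained in at most one member. *)

(* Defs.v *)
From mathcomp Require Import all_boot all_algebra.
From mathcomp Require Import complex.
From mathcomp Require Import Rstruct.

Set Implicit Arguments.
Unset Strict Implicit.
Unset Printing Implicit Defensive.

Import GRing.Theory.
Local Open Scope ring_scope.

Definition C : numClosedFieldType := complex Rdefinitions.R.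

Section Automata.

(* An automaton with state set Q = 'I_n (states q_1..q_n are 0..n-1),
   finite alphabet Sigma, transition function delta. Words are seq Sigma. *)
Variables (n : nat) (Sigma : finType) (delta : 'I_n -> Sigma -> 'I_n).

Definition act (q : 'I_n) (u : seq Sigma) : 'I_n := foldl delta q u.

Definition rk (u : seq Sigma) : nat := #|[set act q u | q : 'I_n]|.

Definition is_reset (u : seq Sigma) : Prop := rk u = 1%N.

Definition synchronizing : Prop := exists u, is_reset u.

(* Matrix of the linear action of u on CQ (row vectors, basis q_1..q_n):
   q *m actmx u = q . u *)
Definition actmx (u : seq Sigma) : 'M[C]_n :=
  \matrix_(q, p) ((act q u == p)%:R : C).

(* The basis (q_j - q_n)_{j = 1..n-1} of w^perp, as the rows of a matrix. *)
Definition wperp_basis : 'M[C]_(n.-1, n) :=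
  \matrix_(j, q) (((val q == val j)%:R : C) - ((val q == n.-1)%:R : C)).

(* rho(u): the matrix of the action of u restricted to the invariant
   subspace w^perp, in the basis wperp_basis (coordinates obtained with the
   partial inverse pinvmx). *)
Definition rho (u : seq Sigma) : 'M[C]_(n.-1) :=
  wperp_basis *m actmx u *m pinvmx wperp_basis.

Definition is_subalg (S : 'M[C]_(n.-1) -> Prop) : Prop :=
  [/\ S 1%:M,
      forall A B, S A -> S B -> S (A + B),
      forall (c : C) A, S A -> S (c *: A)
    & forall A B, S A -> S B -> S (A *m B)].

(* R: the C-algebra generated by rho(Sigma^* ) (smallest subalgebra). *)
Definition inR (A : 'M[C]_(n.-1)) : Prop :=
  forall S, is_subalg S -> (forall u, S (rho u)) -> S A.

(* Jacobson radical of R: x in R such that 1 - r x is a unit of R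
   for every r in R. *)
Definition inRad (x : 'M[C]_(n.-1)) : Prop :=
  inR x /\
  forall r, inR r ->
    exists y, [/\ inR y, y *m (1%:M - r *m x) = 1%:M
                       & (1%:M - r *m x) *m y = 1%:M].

(* Rad(A) = rho^{-1}(Rad(R)); A semisimple iff Rad(A) = Syn(A). *)
Definition inRadA (u : seq Sigma) : Prop := inRad (rho u).

Definition semisimple : Prop := forall u, inRadA u <-> is_reset u.

(* A Wedderburn-Artin decomposition R / Rad(R) ~= prod_{i<k} M_{ns i}(C),
   given as the composite of the quotient map with the isomorphism, i.e. a
   family of maps phi_i (only their restriction to R matters) that together
   form a surjective unital algebra morphism R -> prod_i M_{ns i}(C) whose
   kernel is Rad(R). *)
Definition wedderburn (k : nat) (ns : 'I_k -> nat)
  (phi : forall i : 'I_k, 'M[C]_(n.-1) -> 'M[C]_(ns i)) : Prop :=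
  (forall i, (0 < ns i)%N) /\
  (forall i, phi i 1%:M = 1%:M) /\
  (forall i A B, inR A -> inR B -> phi i (A + B) = phi i A + phi i B) /\
  (forall i (c : C) A, inR A -> phi i (c *: A) = c *: phi i A) /\
  (forall i A B, inR A -> inR B -> phi i (A *m B) = phi i A *m phi i B) /\
  (forall M : forall i, 'M[C]_(ns i),
     exists A, inR A /\ forall i, phi i A = M i) /\
  (forall A, inR A -> ((forall i, phi i A = 0) <-> inRad A)).

Section Theta.
Variables (k : nat) (ns : 'I_k -> nat)
  (phi : forall i : 'I_k, 'M[C]_(n.-1) -> 'M[C]_(ns i)).

Definition theta (i : 'I_k) (u : seq Sigma) : 'M[C]_(ns i) := phi i (rho u).

Definition in_theta_monoid (i : 'I_k) (M : 'M[C]_(ns i)) : Prop :=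
  exists u, M = theta i u.

Definition is_ideal (i : 'I_k) (J : 'M[C]_(ns i) -> Prop) : Prop :=
  [/\ exists M, J M,
      forall M, J M -> in_theta_monoid M
    & forall S M, in_theta_monoid S -> J M -> J (S *m M) /\ J (M *m S)].

Definition zero_minimal_ideal (i : 'I_k) (J : 'M[C]_(ns i) -> Prop) : Prop :=
  [/\ is_ideal J,
      exists M, J M /\ M <> 0
    & forall K, is_ideal K -> (forall M, K M -> J M) ->
        (forall M, K M <-> M = 0) \/ (forall M, K M <-> J M)].

Definition is_Rnk (i : 'I_k) (J : 'M[C]_(ns i) -> Prop) (r : nat) : Prop :=
  (exists x, [/\ J (theta i x), theta i x <> 0 & rk x = r]) /\
  (forall x, J (theta i x) -> theta i x <> 0 -> (r <= rk x)%N).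

Definition is_core (T : {set 'I_k}) : Prop :=
  forall x, (forall i, i \in T -> theta i x = 0) -> forall i, theta i x = 0.

Definition is_minimal_core (T : {set 'I_k}) : Prop :=
  is_core T /\ forall T' : {set 'I_k}, T' \proper T -> ~ is_core T'.

End Theta.

End Automata.

Definition packing (n r : nat) (F : {set {set 'I_n}}) : bool :=
  [forall A in F, #|A| == r] &&
  [forall P : {set 'I_n}, (#|P| == 2) ==> (#|[set A in F | P \subset A]| <= 1)%N].

Definition D2 (r n : nat) : nat :=
  \max_(F : {set {set 'I_n}} | packing r F) #|F|.

(* Main.v *)
Require Import Defs.
From mathcomp Require Import all_boot all_algebra zify.
From Stdlib Require Import Classical.
Set Implicit Arguments. Unset Strict Implicit. Unset Printing Implicit Defensive.
Import GRing.Theory.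
Local Open Scope ring_scope.

Local Close Scope ring_scope.
Section Comb.
Variables (n : nat) (Sigma : finType) (delta : 'I_n -> Sigma -> 'I_n).

Definition img (T : {set 'I_n}) (u : seq Sigma) : {set 'I_n} :=
  [set act delta q u | q in T].

Lemma act_cat q u v : act delta q (u ++ v) = act delta (act delta q u) v.
Proof. by rewrite /act foldl_cat. Qed.

Lemma img_cat (T : {set 'I_n}) u v : img T (u ++ v) = img (img T u) v.
Proof.
rewrite /img -imset_comp; apply: eq_imset => q /=; exact: act_cat.
Qed.

Lemma img_sub (T T' : {set 'I_n}) u : T \subset T' -> img T u \subset img T' u.
Proof. exact: imsetS. Qed.

Lemma img_card_le (T : {set 'I_n}) u : #|img T u| <= #|T|.
Proof. exact: leq_imset_card. Qed.

Lemma shrink (P A : {set 'I_n}) u :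
  P \subset A -> #|img P u| < #|P| -> #|img A u| < #|A|.
Proof.
move=> PA HP; rewrite ltn_neqAle img_card_le andbT.
apply/negP => /imset_injP inj.
move: HP; rewrite /img card_in_imset ?ltnn //.
by move=> x y /(subsetP PA) xA /(subsetP PA) yA; apply: inj.
Qed.

Definition good (T : {set 'I_n}) (r : nat) :=
  forall u, #|img T u| = 1%N \/ #|img T u| = r.

Lemma collapse (T : {set 'I_n}) (r : nat) :
  (2 <= r)%N -> #|T| = r -> good T r -> (exists u, #|img T u| = 1%N) ->
  exists u, #|img T u| = 1%N /\ (size u <= D2 r n)%N.
Proof.
move=> r2 cT gT [u0 Hu0].
pose P := fun L => [exists t : L.-tuple Sigma, #|img T t| == 1%N].
have exP : exists L, P L.
  exists (size u0); apply/existsP; exists (in_tuple u0); exact/eqP.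
case: (ex_minnP exP) => L /existsP [t /eqP Ht] Lmin.
have minl : forall u, #|img T u| = 1%N -> (L <= size u)%N.
  move=> u Hu; apply: Lmin; apply/existsP; exists (in_tuple u); exact/eqP.
have sizet : size t = L by rewrite size_tuple.
pose A j := img T (take j t).
have cA : forall j, (j < L)%N -> #|A j| = r.
  move=> j jL; case: (gT (take j t)) => // H.
  have := minl _ H; rewrite size_take sizet jL; by rewrite leqNgt jL.
have K : forall j k (Q : {set 'I_n}), (j < k)%N -> (k <= L)%N ->
    #|Q| = 2 -> Q \subset A j -> Q \subset A k -> False.
  move=> j k Q jk kL cQ QA QB.
  have jL : (j < L)%N by apply: leq_trans jk kL.
  pose v := drop k t.
  have Bv : #|img (A k) v| = 1%N by rewrite /A -img_cat cat_take_drop.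
  have Qv : #|img Q v| < #|Q|.
    rewrite cQ ltnS -Bv; apply: subset_leq_card; exact: img_sub.
  have Av := shrink QA Qv.
  rewrite cA // in Av.
  have H1 : #|img T (take j t ++ v)| = 1%N.
    rewrite img_cat; case: (gT (take j t ++ v)); rewrite img_cat // => H.
    by rewrite H ltnn in Av.
  have := minl _ H1; rewrite size_cat size_take size_drop sizet jL.
  rewrite leqNgt; move/negP; apply.
  lia.
have two : forall j, (j < L)%N -> exists Q : {set 'I_n}, #|Q| = 2 /\ Q \subset A j.
  move=> j jL; have : (1 < #|A j|)%N by rewrite cA.
  case/card_gt1P => x [y [xA yA xy]]; exists [set x; y]; split.
    by rewrite cards2 xy.
  by apply/subsetP => z; rewrite !inE => /orP [] /eqP ->.
set F := [set A (val j) | j : 'I_L].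
have injA : injective (fun j : 'I_L => A (val j)).
  move=> j k Ejk; apply/val_inj/eqP; apply/negP => /negP njk.
  case: (two _ (ltn_ord j)) => Q [cQ QA].
  case: (ltngtP (val j) (val k)) => [jk|kj|/eqP]; last by rewrite (negbTE njk).
    apply: (K _ _ Q jk (ltnW (ltn_ord k)) cQ QA); by rewrite -Ejk.
  apply: (K _ _ Q kj (ltnW (ltn_ord j)) cQ); by rewrite -?Ejk.
have cF : #|F| = L by rewrite card_imset // card_ord.
have pF : packing r F.
  apply/andP; split.
    apply/forall_inP => B; rewrite /F => /imsetP [j _ ->]; apply/eqP; exact: cA (ltn_ord j).
  rewrite /F; apply/forallP => Q; apply/implyP => /eqP cQ; rewrite leqNgt; apply/negP.
  case/card_gt1P => B1 [B2 []]; rewrite !inE => /andP [/imsetP [j _ ->] Q1].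
  move=> /andP [/imsetP [k _ ->] Q2] ne.
  case: (ltngtP (val j) (val k)) => [jk|kj|/val_inj e]; last by rewrite e eqxx in ne.
    exact: (K _ _ Q jk (ltnW (ltn_ord k)) cQ Q1 Q2).
  exact: (K _ _ Q kj (ltnW (ltn_ord j)) cQ Q2 Q1).
exists t; split => //; rewrite sizet -cF.
exact: (@leq_bigmax_cond _ (fun F => packing r F) (fun F => #|F|) F pF).
Qed.


Lemma rk_img w : rk delta w = #|img setT w|.
Proof.
rewrite /rk /img; apply: eq_card => x.
by apply/imsetP/imsetP => [[q _ ->]|[q _ ->]]; exists q.
Qed.

Lemma img_nonempty (T : {set 'I_n}) u : (0 < #|T|)%N -> (0 < #|img T u|)%N.
Proof.
case/card_gt0P => x xT; apply/card_gt0P; exists (act delta x u).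
by apply/imsetP; exists x.
Qed.

Lemma phases (q0 : 'I_n) (Mx : nat) (s : seq Sigma) :
  is_reset delta s ->
  (forall w, ~ is_reset delta w -> exists (T : {set 'I_n}) (r : nat),
      [/\ T \subset img setT w, #|T| = r, (2 <= r)%N, (D2 r n <= Mx)%N & good T r]) ->
  forall m w, (rk delta w <= m.+1)%N ->
    exists v, is_reset delta (w ++ v) /\ (size v <= m * Mx)%N.
Proof.
move=> Hs H; elim=> [|m IH] w Hw.
  exists [::]; rewrite cats0; split => //; rewrite /is_reset; apply/eqP.
  rewrite eqn_leq Hw /= rk_img img_nonempty // cardsT card_ord.
  by case: (n) q0 => [[]|].
case: (boolP (rk delta w == 1%N)) => [/eqP rw|nrw].
  by exists [::]; rewrite cats0.
have [T [r [TX cT r2 DM gT]]] : exists (T : {set 'I_n}) (r : nat),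
      [/\ T \subset img setT w, #|T| = r, (2 <= r)%N, (D2 r n <= Mx)%N & good T r].
  apply: H; rewrite /is_reset => e; by rewrite e eqxx in nrw.
have [u [Tu su]] : exists u, #|img T u| = 1%N /\ (size u <= D2 r n)%N.
  apply: (collapse r2 cT gT); exists s; apply/eqP; rewrite eqn_leq.
  rewrite img_nonempty ?cT ?(leq_trans _ r2) // andbT.
  rewrite -Hs rk_img; apply: subset_leq_card; apply: img_sub; exact: subsetT.
have lt : (rk delta (w ++ u) < rk delta w)%N.
  rewrite !rk_img img_cat; apply: (shrink TX); by rewrite Tu cT.
have [v [Hv sv]] := IH (w ++ u) (leq_trans lt Hw).
exists (u ++ v); rewrite catA; split => //.
rewrite size_cat mulSn; apply: leq_add => //; exact: leq_trans su DM.
Qed.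

End Comb.

Local Open Scope ring_scope.
Lemma sum_delta (p : nat) (F : 'I_p -> C) (i : 'I_p) :
  \sum_(q < p) (q == i)%:R * F q = F i.
Proof.
rewrite (bigD1 i) //= eqxx mul1r (@big1 C 0 _ _ _ _ _) ?addr0 // => q /negbTE ->; by rewrite mul0r.
Qed.

Lemma sum_delta1 (p : nat) (i : 'I_p) : \sum_(q < p) (q == i)%:R = 1 :> C.
Proof.
rewrite -[RHS](sum_delta (fun _ => 1) i); apply: eq_bigr => q _; by rewrite mulr1.
Qed.

Section Alg.
Variables (m : nat) (Sigma : finType) (delta : 'I_m.+1 -> Sigma -> 'I_m.+1).

Definition Emx : 'M[C]_(m.+1, m) := \matrix_(q, j) ((val q == val j)%:R).
Definition ones : 'cV[C]_(m.+1) := const_mx 1.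
Local Notation W := (wperp_basis m.+1).
Local Notation wid := (widen_ord (leqnSn m)).

Lemma Wentry (j : 'I_m) (q : 'I_m.+1) :
  W j q = (q == wid j)%:R - (q == ord_max)%:R.
Proof. by rewrite mxE -!val_eqE. Qed.

Lemma WE : W *m Emx = 1%:M.
Proof.
apply/matrixP => i j; rewrite !mxE big_ord_recr /=.
rewrite [Emx ord_max j]mxE (_ : (val (@ord_max m) == val j) = false) ?mulr0 ?addr0;
  last by apply/negbTE; rewrite neq_ltn ltn_ord orbT.
transitivity (\sum_(q < m) (q == i)%:R * (q == j)%:R : C).
  apply: eq_bigr => q _; rewrite Wentry mxE.
  rewrite (_ : (wid q == ord_max) = false) ?subr0; last first.
    by apply/negbTE; rewrite -val_eqE /= neq_ltn ltn_ord.
  by rewrite -!val_eqE.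
by rewrite sum_delta eq_sym.
Qed.

Lemma Wones : W *m ones = 0.
Proof.
apply/matrixP => i j; rewrite !mxE.
under eq_bigr do rewrite Wentry !mxE mulr1.
by rewrite sumrB !sum_delta1 subrr.
Qed.

Lemma actmx_ones u : actmx delta u *m ones = ones.
Proof.
apply/matrixP => i j; rewrite !mxE.
under eq_bigr do rewrite !mxE mulr1 eq_sym.
exact: sum_delta1.
Qed.

Lemma M_EW k (M : 'M[C]_(k, m.+1)) : M *m ones = 0 -> M = M *m Emx *m W.
Proof.
move=> /matrixP H0; apply/matrixP => i q; rewrite mxE.
have ME : forall j : 'I_m, (M *m Emx) i j = M i (wid j).
  move=> j; rewrite mxE; have e : forall j0 : 'I_m.+1, (val j0 == val j) = (j0 == wid j) by move=> j0; rewrite -val_eqE.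
  under eq_bigr do rewrite mxE e mulrC.
  by rewrite (sum_delta (fun x => M i x)).
under eq_bigr do rewrite ME Wentry.
case: (unliftP ord_max q) => [q'|] ->.
  have -> : lift ord_max q' = wid q'.
    by apply/val_inj; rewrite /= /bump leqNgt; move: (ltn_ord q') => /= ->.
  transitivity (\sum_(j < m) (j == q')%:R * M i (wid j)); last first.
    apply: eq_bigr => j _; rewrite mulrC; congr (_ * _).
    rewrite (_ : (wid q' == ord_max) = false) ?subr0; last first.
      by apply/negbTE; rewrite -val_eqE /=; move: (ltn_ord q') => /= h; rewrite neq_ltn h.
    by rewrite -!val_eqE /= eq_sym.
  by rewrite (sum_delta (fun x => M i (wid x))).
have := H0 i 0; rewrite !mxE big_ord_recr /= mxE mulr1.
under eq_bigr do rewrite mxE mulr1.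
move=> E0; have -> : M i ord_max = - \sum_(j < m) M i (wid j).
  by apply/eqP; rewrite -addr_eq0 addrC E0.
rewrite -sumrN; apply: eq_bigr => j _.
rewrite eqxx (_ : (ord_max == wid j) = false) ?sub0r ?mulrN1 //.
by apply/negbTE; rewrite -val_eqE /= neq_ltn ltn_ord orbT.
Qed.

Lemma WA u : W *m actmx delta u = (W *m actmx delta u *m Emx) *m W.
Proof. by apply: M_EW; rewrite -mulmxA actmx_ones Wones. Qed.

Lemma Wfree : row_free W.
Proof.
rewrite /row_free eqn_leq rank_leq_row /=.
have := mxrankM_maxl W Emx; by rewrite WE mxrank1.
Qed.

Lemma WP : W *m pinvmx W = 1%:M.
Proof.
apply: (row_free_inj Wfree); by rewrite mul1mx mulmxKpV ?submx_refl.
Qed.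

Lemma actmx_cat u v : actmx delta (u ++ v) = actmx delta u *m actmx delta v.
Proof.
apply/matrixP => i j; rewrite !mxE.
under eq_bigr do rewrite !mxE eq_sym.
by rewrite (sum_delta (fun p => ((act delta p v == j)%:R : C))) act_cat.
Qed.

Lemma rho_nil : rho delta [::] = 1%:M.
Proof.
rewrite /rho (_ : actmx delta [::] = 1%:M) ?mulmx1 ?WP //.
by apply/matrixP => i j; rewrite !mxE.
Qed.

Lemma rho_cat u v : rho delta (u ++ v) = rho delta u *m rho delta v.
Proof.
have H : rho delta u *m W = W *m actmx delta u.
  by rewrite /rho {1}WA -(mulmxA (W *m actmx delta u *m Emx) W) WP mulmx1 -WA.
rewrite [rho delta (u ++ v)]/rho [rho delta v]/rho actmx_cat !mulmxA -H.
by [].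
Qed.

End Alg.

Section Theta.
Variables (m : nat) (Sigma : finType) (delta : 'I_m.+1 -> Sigma -> 'I_m.+1)
  (k : nat) (ns : 'I_k -> nat)
  (phi : forall i : 'I_k, 'M[C]_(m.+1.-1) -> 'M[C]_(ns i)).
Hypothesis Hw : wedderburn delta phi.
Hypothesis Hss : semisimple delta.

Local Notation th := (theta delta phi).

Lemma inR_rho u : inR delta (rho delta u).
Proof. by move=> S _ H. Qed.
Lemma inR1 : inR delta 1%:M.
Proof. by move=> S [] . Qed.
Lemma inRD A B : inR delta A -> inR delta B -> inR delta (A + B).
Proof. move=> hA hB S HS Hr; case: (HS) => _ HD _ _; apply: HD; [exact: hA|exact: hB]. Qed.
Lemma inRZ (c : C) A : inR delta A -> inR delta (c *: A).
Proof. move=> hA S HS Hr; case: (HS) => _ _ HZ _; apply: HZ; exact: hA. Qed.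
Lemma inRM A B : inR delta A -> inR delta B -> inR delta (A *m B).
Proof. move=> hA hB S HS Hr; case: (HS) => _ _ _ HM; apply: HM; [exact: hA|exact: hB]. Qed.

Lemma theta_cat i u v : th i (u ++ v) = th i u *m th i v.
Proof.
case: Hw => _ [_ [_ [_ [HM _]]]].
by rewrite /theta rho_cat HM //; apply: inR_rho.
Qed.

Lemma theta_nil i : th i [::] = 1%:M.
Proof. case: Hw => _ [H1 _]; by rewrite /theta rho_nil H1. Qed.

Lemma irr i (A B : 'M[C]_(ns i)) : A != 0 -> B != 0 ->
  exists b, A *m th i b *m B != 0.
Proof.
case: Hw => _ [H1 [HD [HZ [HM [HS HK]]]]].
move=> nA nB; apply: NNPP => Hn.
have H0 : forall b, A *m th i b *m B = 0.
  move=> b; case: (eqVneq (A *m th i b *m B) 0) => // ne; exfalso; apply: Hn; by exists b.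
pose S X := inR delta X /\ forall (A' B' : 'M[C]_(ns i)),
   (forall b, A' *m th i b *m B' = 0) -> A' *m phi i X *m B' = 0.
have subS : is_subalg S.
  split.
  - split; first exact: inR1.
    move=> A' B' H; have := H [::]; by rewrite theta_nil H1.
  - move=> X Y [iX hX] [iY hY]; split; first exact: inRD.
    move=> A' B' H; rewrite HD // mulmxDr mulmxDl hX // hY // addr0 //.
  - move=> c X [iX hX]; split; first exact: inRZ.
    move=> A' B' H; rewrite HZ // -scalemxAr -scalemxAl hX // scaler0 //.
  - move=> X Y [iX hX] [iY hY]; split; first exact: inRM.
    move=> A' B' H; rewrite HM // mulmxA -(mulmxA _ (phi i Y)).
    apply: hX => b; rewrite mulmxA; apply: hY => b'.
    by rewrite -(mulmxA A') -theta_cat H.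
have rhoS : forall u, S (rho delta u).
  move=> u; split; first exact: inR_rho.
  move=> A' B' H; exact: H u.
case/matrix0Pn: nA => p [a0 Ha]; case/matrix0Pn: nB => b0 [q Hb].
pose M := fun j : 'I_k => (\matrix_(a, b) (((val a == val a0) && (val b == val b0))%:R : C) : 'M[C]_(ns j)).
have [X [iX PX]] := HS M.
have [_ hX] := iX S subS rhoS.
have := hX A B H0; rewrite PX => /matrixP /(_ p q); rewrite !mxE => E.
suff Hs : \sum_j (A *m M i) p j * B j q = A p a0 * B b0 q.
  by move: (mulf_neq0 Ha Hb); rewrite -Hs E eqxx.
transitivity (\sum_(b < ns i) (b == b0)%:R * (A p a0 * B b0 q)); last first.
  by rewrite (sum_delta (fun _ => A p a0 * B b0 q)).
apply: eq_bigr => b _; rewrite mxE big_distrl /=.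
transitivity (\sum_(a < ns i) (a == a0)%:R * (A p a0 * (b == b0)%:R * B b q)).
  apply: eq_bigr => a _; rewrite mxE !val_eqE.
  case: (eqVneq a a0) => [->|ne]; case: (eqVneq b b0) => [->|ne'] /=;
    by rewrite ?mulr1 ?mulr0 ?mul1r ?mul0r.
rewrite (sum_delta (fun _ => A p a0 * (b == b0)%:R * B b q)).
case: (eqVneq b b0) => [->|ne'] /=; by rewrite ?mulr1 ?mulr0 ?mul1r ?mul0r.
Qed.

Lemma reset_theta u : is_reset delta u -> forall j, th j u = 0.
Proof.
case: Hw => _ [_ [_ [_ [_ [_ HK]]]]].
move=> /(Hss u) Hr j; have := (HK _ (inR_rho u)).2 Hr; exact.
Qed.

Lemma nonreset_theta u : ~ is_reset delta u -> exists j, th j u != 0.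
Proof.
case: Hw => _ [_ [_ [_ [_ [_ HK]]]]].
move=> nr; case: (boolP [forall j, th j u == 0]) => [/forallP H|/forallPn [j Hj]].
  exfalso; apply: nr; apply/(Hss u); apply/(HK _ (inR_rho u)) => j; exact/eqP.
by exists j.
Qed.

End Theta.

Section Main.
Variables (m : nat) (Sigma : finType) (delta : 'I_m.+1 -> Sigma -> 'I_m.+1)
  (k : nat) (ns : 'I_k -> nat)
  (phi : forall i : 'I_k, 'M[C]_(m.+1.-1) -> 'M[C]_(ns i))
  (r : 'I_k -> nat) (Cr : {set 'I_k}).
Hypothesis Hw : wedderburn delta phi.
Hypothesis Hss : semisimple delta.
Hypothesis HJ : forall i, exists J : 'M[C]_(ns i) -> Prop,
  zero_minimal_ideal delta phi J /\ is_Rnk delta phi J (r i).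
Hypothesis Hcore : is_core delta phi Cr.
Hypothesis Hmin : forall T' : {set 'I_k}, T' \proper Cr -> ~ is_core delta phi T'.

Local Notation th := (theta delta phi).

Lemma nonreset_core u : ~ is_reset delta u -> exists2 j, j \in Cr & th j u != 0.
Proof.
move=> nr; case: (boolP [exists j in Cr, th j u != 0]) => [/exists_inP [j jC Hj]|H].
  by exists j.
exfalso; have [j Hj] := nonreset_theta Hw Hss nr.
move/exists_inPn: H => H.
have := Hcore (x := u) => /(_ _) /(_ j) Hc.
by rewrite Hc ?eqxx // in Hj => i iC; apply/eqP; move: (H i iC); rewrite negbK.
Qed.

Lemma rk_catl u v : (rk delta (u ++ v) <= rk delta u)%N.
Proof. by rewrite !rk_img img_cat img_card_le. Qed.

Lemma rk_catr u v : (rk delta (u ++ v) <= rk delta v)%N.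
Proof.
rewrite !rk_img img_cat; apply: subset_leq_card; apply: img_sub; exact: subsetT.
Qed.

Lemma rk_pos u : (0 < rk delta u)%N.
Proof. by rewrite rk_img img_nonempty // cardsT card_ord. Qed.

Lemma good_exists w : ~ is_reset delta w ->
  exists (T : {set 'I_m.+1}) (rr : nat),
  [/\ T \subset img delta setT w, #|T| = rr, (2 <= rr)%N,
      (D2 rr m.+1 <= \max_(i in Cr) D2 (r i) m.+1)%N & good delta T rr].
Proof.
move=> nw.
have [i iC ti] := nonreset_core nw.
have [z [hz1 hz2]] : exists z, (forall j, j \in Cr :\ i -> th j z = 0) /\ th i z != 0.
  apply: NNPP => Hn; apply: (Hmin (properD1 iC)) => x Hx.
  apply: Hcore => j jC.
  case: (eqVneq j i) => [->|ne].
    case: (eqVneq (th i x) 0) => // ne'; exfalso; apply: Hn; by exists x.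
  by apply: Hx; rewrite !inE ne jC.
have [J [[Jid Jnz Jmin] [[y [Jy ty ry]] Jr]]] := HJ i.
case: Jid => _ _ Jcl.
have ty' : th i y != 0 by apply/eqP.
have [b Hb] := irr Hw hz2 ty'.
have [c Hc] := irr Hw Hb ti.
pose g0 := z ++ b ++ y ++ c.
pose g := g0 ++ w.
have thg : th i g = th i (z ++ b) *m (th i y *m th i (c ++ w)).
  by rewrite /g /g0 -!catA !theta_cat // !mulmxA.
have Jg : J (th i g).
  rewrite thg; apply: (Jcl (th i (z ++ b)) _ (ex_intro _ (z ++ b) erefl) _).1.
  exact: (Jcl (th i (c ++ w)) _ (ex_intro _ (c ++ w) erefl) Jy).2.
have ng : th i g != 0.
  by rewrite /g /g0 -!catA !theta_cat // !mulmxA.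
have thj : forall j, j != i -> j \in Cr -> th j g = 0.
  move=> j ji jC; rewrite /g /g0 -!catA theta_cat // hz1 ?mul0mx //.
  by rewrite !inE ji jC.
have rkg : rk delta g = r i.
  apply/eqP; rewrite eqn_leq; apply/andP; split.
    rewrite -ry /g /g0 -!catA; apply: leq_trans (rk_catr z _) _.
    apply: leq_trans (rk_catr b _) _; exact: rk_catl.
  apply: Jr => //; exact/eqP.
exists (img delta setT g), (r i); split.
- rewrite /g img_cat; apply: img_sub; exact: subsetT.
- by rewrite -rk_img.
- have : rk delta y != 1%N.
    apply/eqP => ry1; apply: ty; exact: (reset_theta Hw Hss ry1).
  rewrite ry; have := rk_pos y; rewrite ry; case: (r i) => [|[|]] //.
- exact: leq_bigmax_cond.
- move=> u; rewrite -img_cat -rk_img.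
  case: (boolP (rk delta (g ++ u) == 1%N)) => [/eqP ->|nr]; first by left.
  right; have nr' : ~ is_reset delta (g ++ u) by rewrite /is_reset => e; rewrite e eqxx in nr.
  have [j jC Hj] := nonreset_core nr'.
  have ji : j = i.
    apply/eqP; apply: contraNT Hj => ji; by rewrite theta_cat // thj // mul0mx.
  subst j.
  apply/eqP; rewrite eqn_leq -{1}rkg rk_catl /=.
  apply: Jr => //; last exact/eqP.
  rewrite theta_cat //; exact: (Jcl (th i u) _ (ex_intro _ u erefl) Jg).2.
Qed.

End Main.

Theorem mainTheorem14 (n : nat) (Sigma : finType)
  (delta : 'I_n -> Sigma -> 'I_n)
  (k : nat) (ns : 'I_k -> nat)
  (phi : forall i : 'I_k, 'M[C]_(n.-1) -> 'M[C]_(ns i))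
  (r : 'I_k -> nat) (Cr : {set 'I_k}) :
  synchronizing delta ->
  semisimple delta ->
  wedderburn delta phi ->
  (forall i, exists J : 'M[C]_(ns i) -> Prop, zero_minimal_ideal delta phi J /\
                       is_Rnk delta phi J (r i)) ->
  is_minimal_core delta phi Cr ->
  exists w : seq Sigma,
    is_reset delta w /\
    (size w <= (n - 1) * \max_(i in Cr) D2 (r i) n)%N.
Proof.
case: n delta phi => [|m] delta phi [s Hs] Hss Hw HJ [Hcore Hmin].
  exfalso; move: Hs; rewrite /is_reset /rk => e.
  have := max_card [set act delta q s | q : 'I_0]; by rewrite e card_ord.
have := phases ord0 Hs (good_exists Hw Hss HJ Hcore Hmin).
move=> /(_ m [::]) [].
  rewrite /rk; apply: leq_trans (max_card _) _; by rewrite card_ord.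
move=> v [Hv sv]; exists v; split => //.
by rewrite subn1.
Qed.
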